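(* Let $G$ be an infinite abelian group and $(a_n)_{n\in\omega}$ a $T$-sequence in $G$. Then the coarse space $(G,\mathcal{S}_{\tau(a_n)})$ is metrizable if and only if $G$ is countable.
   Context: A sequence $(a_n)$ in an abelian group $G$ is a $T$-sequence if there is a Hausdorff group topology on $G$ in which $(a_n)\to0$; $\tau(a_n)$ is the strongest group topology on $G$ in which $(a_n)\to0$. $\mathcal{S}_{\tau}$ is the smallest group ideal on $G$ containing every set $\{x\}\cup\{x_n:n\in\omega\}$ with $x_n\to x$ in $(G,\tau)$; a group ideal (family of subsets containing all finite sets, closed under subsets and under $(A,B)\mapsto A-B$) defines the coarse structure on $G$ with base $\{\{(x,y):x\in A+y\}:A\in\mathcal{I}\}$. A coarse space is metrizable iff its coarse structure has a countable base (a subfamily such that every entourage is contained in a member of it). *)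

(* Defs.v *)
From HB Require Import structures.
From mathcomp Require Import all_boot all_order all_algebra.
Set Implicit Arguments. Unset Strict Implicit. Unset Printing Implicit Defensive.
Import GRing.Theory.
Local Open Scope ring_scope.

Definition is_topology (T : Type) (op : (T -> Prop) -> Prop) : Prop :=
  [/\ op (fun _ => True),
      (forall U V, op U -> op V -> op (fun x => U x /\ V x)) &
      (forall (F : (T -> Prop) -> Prop),
          (forall U, F U -> op U) -> op (fun x => exists2 U, F U & U x))].

(* Group topology on an abelian group: (x,y) |-> x - y is continuous
   (continuity w.r.t. the product topology, written out pointwise). *)
Definition group_topology (G : zmodType) (op : (G -> Prop) -> Prop) : Prop :=
  is_topology op /\
  forall (x y : G) (U : G -> Prop), op U -> U (x - y) ->
    exists V W, [/\ op V, V x, op W, W y &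
                    forall v w, V v -> W w -> U (v - w)].

Definition hausdorff (T : Type) (op : (T -> Prop) -> Prop) : Prop :=
  forall x y : T, x <> y ->
    exists U V, [/\ op U, op V, U x, V y & forall z, ~ (U z /\ V z)].

Definition converges (T : Type) (op : (T -> Prop) -> Prop)
    (u : nat -> T) (x : T) : Prop :=
  forall U, op U -> U x -> exists N, forall n, (N <= n)%N -> U (u n).

Definition T_sequence (G : zmodType) (a : nat -> G) : Prop :=
  exists op, [/\ group_topology op, hausdorff op & converges op a 0].

Definition is_tau (G : zmodType) (a : nat -> G) (op : (G -> Prop) -> Prop)
    : Prop :=
  [/\ group_topology op, converges op a 0 &
      forall op', group_topology op' -> converges op' a 0 ->
        forall U, op' U -> op U].

Definition finite_set (G : zmodType) (A : G -> Prop) : Prop :=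
  exists s : seq G, forall x, A x -> x \in s.

Definition set_sub (G : zmodType) (A B : G -> Prop) : G -> Prop :=
  fun z => exists a b, [/\ A a, B b & z = a - b].

Definition group_ideal (G : zmodType) (I : (G -> Prop) -> Prop) : Prop :=
  [/\ (forall A, finite_set A -> I A),
      (forall A B, I A -> (forall x, B x -> A x) -> I B) &
      (forall A B, I A -> I B -> I (set_sub A B))].

Definition conv_set (G : zmodType) (op : (G -> Prop) -> Prop) (A : G -> Prop)
    : Prop :=
  exists (u : nat -> G) (x : G), converges op u x /\
    (forall z, A z <-> (z = x \/ exists n, z = u n)).

Definition S_ideal (G : zmodType) (op : (G -> Prop) -> Prop) (A : G -> Prop)
    : Prop :=
  forall I, group_ideal I -> (forall B, conv_set op B -> I B) -> I A.

Definition ent_of (G : zmodType) (A : G -> Prop) : G -> G -> Prop :=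
  fun x y => exists2 a, A a & x = a + y.

Definition entourage (G : zmodType) (I : (G -> Prop) -> Prop)
    (E : G -> G -> Prop) : Prop :=
  exists2 A, I A & forall x y, E x y -> ent_of A x y.

(* Metrizable: the coarse structure has a countable base. *)
Definition coarse_metrizable (G : zmodType) (I : (G -> Prop) -> Prop) : Prop :=
  exists B : nat -> (G -> G -> Prop),
    (forall n, entourage I (B n)) /\
    (forall E, entourage I E -> exists n, forall x y, E x y -> B n x y).

Definition infinite_type (T : eqType) : Prop :=
  ~ exists s : seq T, forall x, x \in s.

Definition countable_type (T : Type) : Prop :=
  exists f : T -> nat, injective f.

(* Main.v *)
Require Import Defs.
From mathcomp Require Import all_boot all_order all_algebra.
From Stdlib Require Import ClassicalEpsilon Classical.
Set Implicit Arguments. Unset Strict Implicit. Unset Printing Implicit Defensive.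
Import GRing.Theory.
Local Open Scope ring_scope.

Lemma choice_fun (A B : Type) (R : A -> B -> Prop) :
  (forall x, exists y, R x y) -> exists f : A -> B, forall x, R x (f x).
Proof.
move=> H; exists (fun x => proj1_sig (constructive_indefinite_description _ (H x))).
by move=> x; exact: proj2_sig.
Qed.

Definition Am (G : zmodType) (a : nat -> G) (m : nat) : G -> Prop :=
  fun c => c = 0 \/ exists n, (m <= n)%N /\ (c = a n \/ c = - a n).

Fixpoint Sm (G : zmodType) (a : nat -> G) (m : nat -> nat) (i k : nat) : G -> Prop :=
  match k with
  | 0%N => fun x => x = 0
  | k'.+1 => fun x => exists c s, [/\ Am a (m i) c, Sm a m i.+1 k' s & x = c + s]
  end.

Definition z0 : nat -> nat := fun _ => 0%N.
Definition Sk (G : zmodType) (a : nat -> G) k := Sm a z0 0 k.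
Definition Uo (G : zmodType) (a : nat -> G) m : G -> Prop := fun x => exists k, Sm a m 0 k x.

Lemma Am_mono (G : zmodType) (a : nat -> G) m1 m2 c :
  (m1 <= m2)%N -> Am a m2 c -> Am a m1 c.
Proof.
move=> le [->|[n [hn h]]]; first by left.
by right; exists n; split=> //; exact: leq_trans hn.
Qed.

Lemma Am_neg (G : zmodType) (a : nat -> G) m c : Am a m c -> Am a m (- c).
Proof.
case=> [->|[n [hn [->|->]]]]; first by left; rewrite oppr0.
- by right; exists n; split=> //; right.
- by right; exists n; split=> //; left; rewrite opprK.
Qed.

Lemma Sm0 (G : zmodType) (a : nat -> G) m k i : Sm a m i k 0.
Proof.
elim: k i => [|k IH] i //=.
by exists 0, 0; split=> //; [left | rewrite addr0].
Qed.

Lemma Sm_neg (G : zmodType) (a : nat -> G) m k i x : Sm a m i k x -> Sm a m i k (- x).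
Proof.
elim: k i x => [|k IH] i x /=; first by move=> ->; rewrite oppr0.
move=> [c [s [hc hs ->]]]; exists (- c), (- s); split.
- exact: Am_neg.
- exact: IH.
- by rewrite opprD.
Qed.

Lemma Sm_mono (G : zmodType) (a : nat -> G) m m' k i x :
  (forall l, (m l <= m' l)%N) -> Sm a m' i k x -> Sm a m i k x.
Proof.
move=> hm; elim: k i x => [|k IH] i x //=.
move=> [c [s [hc hs ->]]]; exists c, s; split=> //.
- exact: Am_mono hc.
- exact: IH.
Qed.

Lemma Sm_S (G : zmodType) (a : nat -> G) m k i j x : Sm a m i k x -> Sm a z0 j k x.
Proof.
elim: k i j x => [|k IH] i j x //=.
move=> [c [s [hc hs ->]]]; exists c, s; split=> //.
- exact: Am_mono hc.
- exact: IH hs.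
Qed.

Lemma Sm_cat (G : zmodType) (a : nat -> G) m k k' i x y :
  Sm a m i k x -> Sm a m (i + k) k' y -> Sm a m i (k + k') (x + y).
Proof.
elim: k i x => [|k IH] i x /=.
  by move=> -> ; rewrite addn0 add0r add0n.
move=> [c [s [hc hs ->]]] hy; rewrite ?addSn /=.
exists c, (s + y); split=> //; last by rewrite addrA.
by apply: IH=> //; rewrite addSn -addnS.
Qed.

Lemma Sm_split (G : zmodType) (a : nat -> G) m k k' i z :
  Sm a m i (k + k') z -> exists x y, [/\ Sm a m i k x, Sm a m (i + k) k' y & z = x + y].
Proof.
elim: k i z => [|k IH] i z /=.
  by rewrite add0n addn0 => h; exists 0, z; rewrite add0r.
rewrite ?addSn /= => [[c [s [hc hs ->]]]].
have [x [y [hx hy ->]]] := IH _ _ hs.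
exists (c + x), y; split=> //; first by exists c, x.
- by rewrite addSn -addnS in hy.
- by rewrite addrA.
Qed.

Lemma Sm_shift (G : zmodType) (a : nat -> G) m d k j y :
  Sm a (fun i => m (d + i)%N) j k y -> Sm a m (d + j) k y.
Proof.
elim: k j y => [|k IH] j y //=.
move=> [c [s [hc hs ->]]]; exists c, s; split=> //.
by rewrite -addnS; exact: IH.
Qed.

Lemma Sk_add (G : zmodType) (a : nat -> G) k k' x y :
  Sk a k x -> Sk a k' y -> Sk a (k + k') (x + y).
Proof. by move=> hx hy; apply: Sm_cat hx _; exact: Sm_S hy. Qed.

Lemma Sm_pad (G : zmodType) (a : nat -> G) m k k' i x :
  (k <= k')%N -> Sm a m i k x -> Sm a m i k' x.
Proof.
move=> le hx; rewrite -(subnKC le) -[x]addr0; apply: Sm_cat hx _; exact: Sm0.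
Qed.

Lemma Sm_inter (G : zmodType) (a : nat -> G) m k i p q :
  Sm a (fun l => maxn (m l.*2) (m l.*2.+1)) i k p ->
  Sm a (fun l => maxn (m l.*2) (m l.*2.+1)) i k q ->
  Sm a m i.*2 k.*2 (p + q).
Proof.
elim: k i p q => [|k IH] i p q /=; first by move=> -> ->; rewrite addr0.
move=> [c [s [hc hs ->]]] [d [t [hd ht ->]]].
exists c, (d + (s + t)); split.
- exact: Am_mono (leq_maxl _ _) hc.
- exists d, (s + t); split=> //.
  + exact: Am_mono (leq_maxr _ _) hd.
  + by rewrite -doubleS; exact: IH.
- by rewrite -!addrA (addrCA s).
Qed.

Definition opP (G : zmodType) (a : nat -> G) (O : G -> Prop) : Prop :=
  forall x, O x -> exists m, forall y, Uo a m y -> O (x + y).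

Lemma Uo_open (G : zmodType) (a : nat -> G) m : opP a (Uo a m).
Proof.
move=> x [k hx]; exists (fun i => m (k + i)%N) => y [k' hy].
exists (k + k')%N; apply: Sm_cat hx _; rewrite -[k]addn0 -[(0 + _)%N]/(k + 0)%N.
by rewrite addn0 -[k]addn0; exact: Sm_shift.
Qed.

Lemma opP_group (G : zmodType) (a : nat -> G) : group_topology (opP a).
Proof.
split; first split.
- by move=> x _; exists z0.
- move=> U V hU hV x [Ux Vx].
  have [m1 h1] := hU x Ux; have [m2 h2] := hV x Vx.
  exists (fun i => maxn (m1 i) (m2 i)) => y [k hy]; split.
  + by apply: h1; exists k; apply: Sm_mono hy => l; exact: leq_maxl.
  + by apply: h2; exists k; apply: Sm_mono hy => l; exact: leq_maxr.
- move=> F hF x [U FU Ux].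
  have [m hm] := hF U FU x Ux.
  by exists m => y hy; exists U => //; exact: hm.
move=> x y O hO Oxy.
have [m hm] := hO _ Oxy.
pose me := fun l => maxn (m l.*2) (m l.*2.+1).
exists (fun v => exists k, Sm a me 0 k (v - x)), (fun w => exists k, Sm a me 0 k (w - y)).
have opn : forall z, opP a (fun v => exists k, Sm a me 0 k (v - z)).
  move=> z v [k hv]; exists (fun i => me (k + i)%N) => t [k' ht].
  exists (k + k')%N; rewrite addrAC; apply: Sm_cat hv _.
  by rewrite add0n; move: (Sm_shift ht); rewrite addn0.
split.
- exact: opn.
- by exists 0%N; rewrite subrr.
- exact: opn.
- by exists 0%N; rewrite subrr.
move=> v w [k hv] [k' hw].
have hv' : Sm a me 0 (k + k') (v - x) by exact: Sm_pad (leq_addr _ _) hv.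
have hw' : Sm a me 0 (k + k') (- (w - y)).
  by apply: Sm_neg; exact: Sm_pad (leq_addl _ _) hw.
have := hm _ (ex_intro _ (k + k').*2 (Sm_inter (m:=m) hv' hw')).
congr O.
by rewrite opprB addrCA -[x - y + _]addrA addKr addrA addrNK.
Qed.

Lemma opP_conv (G : zmodType) (a : nat -> G) : converges (opP a) a 0.
Proof.
move=> U hU U0; have [m hm] := hU _ U0.
exists (m 0%N) => n hn; rewrite -[a n]add0r; apply: hm; exists 1%N.
exists (a n), 0; split=> //; last by rewrite addr0.
by right; exists n; split=> //; left.
Qed.

Lemma gt_split (G : zmodType) (op : (G -> Prop) -> Prop) Y :
  group_topology op -> op Y -> Y 0 ->
  exists P Q, [/\ op P, P 0, op Q, Q 0 & forall p q, P p -> Q q -> Y (p - q)].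
Proof.
move=> [_ hg] hY Y0; have := hg 0 0 Y hY; rewrite subrr => /(_ Y0).
by move=> [P [Q [? ? ? ? ?]]]; exists P, Q.
Qed.

Lemma gt_inter (G : zmodType) (op : (G -> Prop) -> Prop) U V :
  group_topology op -> op U -> op V -> op (fun x => U x /\ V x).
Proof. by move=> [[_ h _] _]; exact: h. Qed.

Lemma gt_whole (G : zmodType) (op : (G -> Prop) -> Prop) :
  group_topology op -> op (fun _ => True).
Proof. by move=> [[h _ _] _]. Qed.

Lemma gt_pm (G : zmodType) (a : nat -> G) (op : (G -> Prop) -> Prop) P :
  group_topology op -> converges op a 0 -> op P -> P 0 ->
  exists N, forall n, (N <= n)%N -> P (a n) /\ P (- a n).
Proof.
move=> hg hc hP P0.
have [P1 [Q1 [oP1 P10 oQ1 Q10 h]]] := gt_split hg hP P0.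
have [N1 h1] := hc _ hP P0; have [N2 h2] := hc _ oQ1 Q10.
exists (maxn N1 N2) => n; rewrite geq_max => /andP [n1 n2]; split.
- exact: h1.
- by rewrite -sub0r; apply: h=> //; exact: h2.
Qed.

Lemma Sk0 (G : zmodType) (a : nat -> G) s : Sk a 0 s <-> s = 0.
Proof. by []. Qed.

Lemma Sk_succ (G : zmodType) (a : nat -> G) k s c :
  Am a 0 c -> Sk a k s -> Sk a k.+1 (c + s).
Proof. by move=> hc hs; exists c, s; split=> //; exact: Sm_S hs. Qed.

Lemma Sep (G : zmodType) (a : nat -> G) (op : (G -> Prop) -> Prop) :
  group_topology op -> hausdorff op -> converges op a 0 ->
  forall k v, ~ Sk a k v ->
  exists V, [/\ op V, V 0 & forall s w, Sk a k s -> V w -> v <> s - w].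
Proof.
move=> hg hh hcv; elim=> [|k IH] v nS.
  have nv : - v <> 0 by move=> /eqP; rewrite oppr_eq0 => /eqP.
  have [U [V [oU oV Uv V0 dis]]] := hh _ _ nv.
  exists V; split=> // s w -> Vw ev; apply: (dis w); split=> //.
  by have -> : w = - v by rewrite ev sub0r opprK.
have nSk : ~ Sk a k v.
  by move=> h; apply: nS; rewrite -[v]add0r; apply: Sk_succ h; left.
have [V0 [oV0 V00 h0]] := IH _ nSk.
have [P [Q [oP P0 oQ Q0 hPQ]]] := gt_split hg oV0 V00.
have [N hN] := gt_pm hg hcv oQ Q0.
have nS1 : forall n, ~ Sk a k (v - a n).
  move=> n h; apply: nS; rewrite -[v](subrK (a n)) addrC; apply: Sk_succ h.
  by right; exists n; split=> //; left.
have nS2 : forall n, ~ Sk a k (v + a n).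
  move=> n h; apply: nS; rewrite -[v](addrK (a n)) addrC; apply: Sk_succ h.
  by right; exists n; split=> //; right.
have FI : forall M, exists V, [/\ op V, V 0 & forall n, (n < M)%N -> forall s w,
    Sk a k s -> V w -> v - a n <> s - w /\ v + a n <> s - w].
  elim=> [|M IHM]; first by exists (fun _ => True); split=> //; exact: gt_whole.
  have [VM [oVM VM0 hM]] := IHM.
  have [V1 [oV1 V10 h1]] := IH _ (nS1 M).
  have [V2 [oV2 V20 h2]] := IH _ (nS2 M).
  exists (fun x => VM x /\ (V1 x /\ V2 x)); split.
  - by apply: gt_inter=> //; exact: gt_inter.
  - by [].
  move=> n; rewrite ltnS leq_eqVlt => /orP [/eqP -> | ltn] s w hs [wM [w1 w2]].
    by split; [exact: h1 | exact: h2].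
  exact: hM.
have [VN [oVN VN0 hVN]] := FI N.
exists (fun x => P x /\ VN x); split=> //; first exact: gt_inter.
move=> s w [c [s' [hc hs' ->]]] [Pw VNw] ev.
have hs'' : Sk a k s' by exact: Sm_S hs'.
have ev' : v - c = s' - w by rewrite ev addrC -!addrA addKr.
case: hc => [c0 | [n [_ hcn]]].
  move: ev'; rewrite c0 subr0 => ev'.
  by apply: (h0 s' w hs'' _ ev'); rewrite -[w]subr0; apply: hPQ.
case: (ltnP n N) => [ltn | len].
  have [hn1 hn2] := hVN n ltn s' w hs'' VNw.
  by case: hcn => hcn; [apply: hn1 | apply: hn2]; rewrite -ev' hcn ?opprK.
have [Qa Qna] := hN n len.
apply: (h0 s' (w - c) hs'' _); first by apply: hPQ=> //; case: hcn => ->.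
by rewrite opprB -[v](subrK c) ev' -addrA [- w + c]addrC.
Qed.

Fixpoint chain (G : Type) (st : (G -> Prop) -> (G -> Prop) * (G -> Prop) * nat)
  (Vf : nat -> G -> Prop) (j : nat) : G -> Prop :=
  match j with
  | 0%N => Vf 0%N
  | j'.+1 => fun z => (st (chain st Vf j')).1.2 z /\ Vf j'.+1 z
  end.

Lemma conv_trans (G : zmodType) (op : (G -> Prop) -> Prop) u x :
  group_topology op -> converges op u x -> converges op (fun n => u n - x) 0.
Proof.
move=> [_ hg] hc U hU U0.
have := hg x x U hU; rewrite subrr => /(_ U0) [V [W [oV Vx oW Wx h]]].
have [N hN] := hc _ oV Vx; exists N => n hn; apply: h=> //; exact: hN.
Qed.

Lemma KL (G : zmodType) (a : nat -> G) tau op :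
  is_tau a tau -> group_topology op -> hausdorff op -> converges op a 0 ->
  forall u x, converges tau u x ->
  exists k N, forall n, (N <= n)%N -> Sk a k (u n - x).
Proof.
move=> [gtau _ maxt] hg hh hca u x hux.
have hv := conv_trans gtau hux.
set v := fun n => u n - x in hv *.
apply: NNPP => H.
have H' : forall j, exists n, (j <= n)%N /\ ~ Sk a j (v n).
  move=> j; apply: NNPP => Hj; apply: H; exists j, j => n hn.
  by apply: NNPP => hn'; apply: Hj; exists n.
have [g hg'] := choice_fun H'.
have : forall j, exists V : G -> Prop,
    [/\ op V, V 0 & forall s w, Sk a j s -> V w -> v (g j) <> s - w].
  by move=> j; exact: Sep hg hh hca j _ (hg' j).2.
move=> /choice_fun [Vf hVf].
have : forall Y : G -> Prop, exists t : (G -> Prop) * (G -> Prop) * nat,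
   op Y -> Y 0 ->
   [/\ op t.1.1, t.1.1 0, op t.1.2, t.1.2 0 &
     (forall p q, t.1.1 p -> t.1.2 q -> Y (p - q)) /\
     (forall n, (t.2 <= n)%N -> t.1.1 (a n) /\ t.1.1 (- a n))].
  move=> Y.
  case: (classic (op Y /\ Y 0)) => [[oY Y0] | nY]; last first.
    by exists (fun _ => True, fun _ => True, 0%N) => oY Y0; case: nY.
  have [P [Q [oP P0 oQ Q0 hPQ]]] := gt_split hg oY Y0.
  have [N hN] := gt_pm hg hca oP P0.
  by exists (P, Q, N).
move=> /choice_fun [st hst].
pose Y := chain st Vf.
pose m := fun j => (st (Y j)).2.
have Yok : forall j, op (Y j) /\ Y j 0.
  elim=> [|j [oY Y0]]; first by have [? ? _] := hVf 0%N.
  have [_ _ oQ Q0 _] := hst _ oY Y0; have [oV V0 _] := hVf j.+1.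
  by split; [exact: gt_inter | split].
have YV : forall j z, Y j z -> Vf j z by case=> [|j] z //= [].
have R : forall L j t, Sm a m j L t -> Y j t.
  elim=> [|L IH] j t /=; first by move=> ->; exact: (Yok j).2.
  move=> [c [s [hc hs ->]]].
  have [oY Y0] := Yok j.
  have [_ P0 _ _ [hPQ hN]] := hst _ oY Y0.
  have hs' : Y j.+1 (- s) by apply: IH; exact: Sm_neg.
  rewrite -[s]opprK; apply: hPQ; last by case: hs'.
  case: hc => [-> // | [n [hn [-> | ->]]]]; by have [] := hN n hn.
have tU : tau (Uo a m).
  by apply: (maxt (opP a)); [exact: opP_group | exact: opP_conv | exact: Uo_open].
have [N hN] := hv _ tU (ex_intro _ 0%N (erefl _)).
have [leN nS] := hg' N.
have [K hK] := hN _ leN.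
case: (leqP K N) => [le | lt].
  by apply: nS; apply: Sm_pad le _; exact: Sm_S hK.
move: hK; rewrite -(subnKC (ltnW lt)) => /Sm_split [s [t [hs ht ev]]].
have [_ _ hV] := hVf N.
apply: (hV s (- t)); first exact: Sm_S hs.
- by apply: YV; apply: R; apply: Sm_neg; exact: ht.
- by rewrite opprK ev.
Qed.

Lemma bound_fun (F : nat -> nat) N : exists B, forall i, (i < N)%N -> (F i <= B)%N.
Proof.
elim: N => [|N [B hB]]; first by exists 0%N.
exists (maxn B (F N)) => i; rewrite ltnS leq_eqVlt => /orP [/eqP -> | lt].
  exact: leq_maxr.
by apply: leq_trans (leq_maxl _ _); exact: hB.
Qed.

Lemma bound2 (F : nat -> nat -> nat) N :
  exists B, forall i j, (i < N)%N -> (j < N)%N -> (F i j <= B)%N.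
Proof.
elim: N => [|N [B hB]]; first by exists 0%N.
have [B1 h1] := bound_fun (F N) N.+1.
have [B2 h2] := bound_fun (fun i => F i N) N.+1.
exists (maxn B (maxn B1 B2)) => i j.
rewrite ltnS leq_eqVlt => /orP [/eqP -> | li]; rewrite ltnS leq_eqVlt => /orP [/eqP -> | lj].
- by apply: leq_trans (leq_maxr _ _); apply: leq_trans (leq_maxl _ _); exact: h1.
- by apply: leq_trans (leq_maxr _ _); apply: leq_trans (leq_maxl _ _); apply: h1; exact: ltnW.
- by apply: leq_trans (leq_maxr _ _); apply: leq_trans (leq_maxr _ _); apply: h2; exact: ltnW.
- by apply: leq_trans (leq_maxl _ _); exact: hB.
Qed.

Lemma bound_seq (T : eqType) (f : T -> nat) (s : seq T) :
  exists B, forall y, y \in s -> (f y <= B)%N.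
Proof.
elim: s => [|z s [B hB]]; first by exists 0%N.
exists (maxn (f z) B) => y; rewrite inE => /orP [/eqP -> | ys].
  exact: leq_maxl.
by apply: leq_trans (leq_maxr _ _); exact: hB.
Qed.

Lemma alg2 (G : zmodType) (x y u v : G) : x - y - (u - v) = (x - u) - (y - v).
Proof. by rewrite !opprB !addrA [x - y + v]addrAC [x - u + v]addrAC [RHS]addrAC. Qed.

Definition Dset (G : zmodType) (a : nat -> G) (e : nat -> G) n k : G -> Prop :=
  fun y => exists i, (i <= n)%N /\ Sk a k (y - e i).

Lemma Dmono (G : zmodType) (a : nat -> G) e n n' y :
  (n <= n')%N -> Dset a e n n y -> Dset a e n' n' y.
Proof.
move=> le [i [hi hS]]; exists i; split; first exact: leq_trans le.
exact: Sm_pad hS.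
Qed.

Lemma Sk_ideal (G : zmodType) (a : nat -> G) tau J k :
  converges tau a 0 -> group_ideal J -> (forall B, conv_set tau B -> J B) ->
  J (Sk a k).
Proof.
move=> hca [hfin hsub hdiff] hconv.
pose A0 := fun c => c = 0 \/ exists n, c = a n.
have JA0 : J A0.
  apply: hconv; exists a, 0; split; first exact: hca.
  move=> z; rewrite /A0; split; case=> [->|[n ->]].
  - by left.
  - by right; exists n.
  - by left.
  - by right; exists n.
have JAm : J (Am a 0).
  apply: hsub (hdiff _ _ JA0 JA0) _ => c [-> | [n [_ [-> | ->]]]].
  - by exists 0, 0; rewrite subr0; split=> //; left.
  - by exists (a n), 0; rewrite subr0; split=> //; [right; exists n | left].
  - by exists 0, (a n); rewrite sub0r; split=> //; [left | right; exists n].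
elim: k => [|k IH].
  apply: hfin; exists [:: 0] => x /=; rewrite /Sk /= => ->; exact: mem_head.
apply: hsub (hdiff _ _ IH JAm) _ => y [c [s [hc hs ->]]].
exists s, (- c); split.
- exact: Sm_S hs.
- exact: Am_neg.
- by rewrite opprK addrC.
Qed.

Lemma D_ideal (G : zmodType) (a : nat -> G) tau e n :
  converges tau a 0 -> S_ideal tau (Dset a e n n).
Proof.
move=> hc J hJ hconv.
have JS := Sk_ideal n hc hJ hconv.
have [hfin hsub hdiff] := hJ.
have JF : J (fun w => exists i, (i <= n)%N /\ w = - e i).
  apply: hfin; exists [seq - e i | i <- iota 0 n.+1] => w [i [hi ->]].
  by apply: (map_f (fun j => - e j)); rewrite mem_iota add0n ltnS hi.
apply: hsub (hdiff _ _ JS JF) _ => y [i [hi hS]].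
exists (y - e i), (- e i); split=> //; first by exists i.
by rewrite opprK subrK.
Qed.

Lemma count_to_metr (G : zmodType) (a : nat -> G) (tau : (G -> Prop) -> Prop) :
  T_sequence a -> is_tau a tau -> countable_type G -> coarse_metrizable (S_ideal tau).
Proof.
move=> [op [hg hh hca]] htau [f finj].
have [_ hct _] := htau.
have : forall n, exists y : G, (exists x, f x = n) -> f y = n.
  move=> n; case: (classic (exists x, f x = n)) => [[x hx] | nx].
    by exists x.
  by exists 0 => h; case: nx.
move=> /choice_fun [e he].
have ef : forall x, e (f x) = x by move=> x; apply: finj; apply: he; exists x.
pose I := fun A : G -> Prop => exists n, forall y, A y -> Dset a e n n y.
have hI : group_ideal I.
  split.
  - move=> A [s hs]; have [B hB] := bound_seq f s.
    exists B => y Ay; exists (f y); split; first exact: hB (hs _ Ay).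
    by rewrite ef subrr; exact: Sm0.
  - by move=> A B [n hn] sub; exists n => y By; apply: hn; apply: sub.
  move=> A B [n hn] [n' hn'].
  pose p := maxn n n'.
  have [M hM] := bound2 (fun i j => f (e i - e j)) p.+1.
  exists (maxn M (p + p)) => z [x [y [Ax By ->]]].
  have [i [hi hSi]] := Dmono (leq_maxl n n') (hn _ Ax).
  have [j [hj hSj]] := Dmono (leq_maxr n n') (hn' _ By).
  exists (f (e i - e j)); split.
    by apply: leq_trans (leq_maxl _ _); apply: hM; rewrite ltnS.
  rewrite ef alg2; apply: Sm_pad (leq_maxr _ _) _.
  by apply: Sk_add hSi _; exact: Sm_neg.
have hconv : forall B, conv_set tau B -> I B.
  move=> B [u [x [hux hB]]].
  have [k [N hN]] := KL htau hg hh hca hux.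
  have [M hM] := bound_fun (fun i => f (u i)) N.
  pose n := maxn (maxn (f x) M) k.
  exists n => z /hB [-> | [i ->]].
    exists (f x); split; first by rewrite /n leq_max leq_max leqnn.
    by rewrite ef subrr; exact: Sm0.
  case: (leqP N i) => [le | lt].
    exists (f x); split; first by rewrite /n leq_max leq_max leqnn.
    by rewrite ef; apply: Sm_pad (hN _ le); exact: leq_maxr.
  exists (f (u i)); split; last by rewrite ef subrr; exact: Sm0.
  by rewrite /n leq_max leq_max (hM _ lt) orbT.
exists (fun n => ent_of (Dset a e n n)); split.
  move=> n; exists (Dset a e n n) => //; exact: D_ideal.
move=> E [A hA hE].
have [n hn] := hA I hI hconv.
exists n => x y /hE [z Az ->]; exists z => //; exact: hn.
Qed.

Lemma metr_to_count (G : zmodType) (tau : (G -> Prop) -> Prop) :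
  coarse_metrizable (S_ideal tau) -> countable_type G.
Proof.
move=> [B [hB hcof]].
pose Ic := fun A : G -> Prop => exists h : nat -> G, forall x, A x -> exists n, h n = x.
have hIc : group_ideal Ic.
  split.
  - move=> A [s hs]; exists (fun n => nth 0 s n) => x Ax.
    by exists (index x s); apply: nth_index; exact: hs.
  - by move=> A A' [h hh] sub; exists h => x /sub /hh.
  move=> A A' [h hh] [h' hh'].
  exists (fun n => match (unpickle n : option (nat * nat)) with
                   | Some (i, j) => h i - h' j | None => 0 end).
  move=> z [x [y [Ax Ay ->]]].
  have [i hi] := hh _ Ax; have [j hj] := hh' _ Ay.
  by exists (pickle (i, j)); rewrite pickleK hi hj.
have hcv : forall A, conv_set tau A -> Ic A.
  move=> A [u [x [_ hA]]].
  exists (fun n => if n is n'.+1 then u n' else x) => z /hA [-> | [n ->]].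
  - by exists 0%N.
  - by exists n.+1.
have : forall n, exists h : nat -> G, forall g, B n g 0 -> exists m, h m = g.
  move=> n; have [A hA hBA] := hB n.
  have [h hh] := hA Ic hIc hcv.
  exists h => g /hBA [c Ac ev]; have [m hm] := hh _ Ac.
  by exists m; rewrite hm ev addr0.
move=> /choice_fun [H hH].
pose F := fun k => match (unpickle k : option (nat * nat)) with
                   | Some (n, m) => H n m | None => 0 end.
have surj : forall g, exists k, F k = g.
  move=> g.
  have [hI1 _ _] : group_ideal (S_ideal tau).
    split.
    - by move=> A fA J [hf _ _] _; exact: hf.
    - by move=> A A' hA sub J hJ hc; have [_ hs _] := hJ; exact: hs (hA J hJ hc) sub.
    - by move=> A A' hA hA' J hJ hc; have [_ _ hd] := hJ; exact: hd (hA J hJ hc) (hA' J hJ hc).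
  have hE : entourage (S_ideal tau) (fun x y => x = g + y).
    exists (fun z => z = g); first by apply: hI1; exists [:: g] => z ->; exact: mem_head.
    by move=> x y ->; exists g.
  have [n hn] := hcof _ hE.
  have [m hm] := hH n g (hn g 0 (esym (addr0 g))).
  by exists (pickle (n, m)); rewrite /F pickleK.
have : forall g, exists k, F k = g by [].
move=> /choice_fun [f hf].
by exists f; apply: (can_inj hf).
Qed.

Theorem theorem7 (G : zmodType) (a : nat -> G)
    (tau : (G -> Prop) -> Prop) :
  infinite_type G -> T_sequence a -> is_tau a tau ->
  (coarse_metrizable (S_ideal tau) <-> countable_type G).
Proof.
move=> _ hT htau; split; first exact: metr_to_count.
exact: count_to_metr hT htau.
Qed.
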